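(* Let $n\ge1$ and let $(\eta,\xi)$ be an $n$-Lie-isoclinism from $\mathfrak g_1$ to $\mathfrak g_2$, and define $\mathcal K$, $Z_{\mathfrak g_1}$, $Z_{\mathfrak g_2}$ as in the context. Assume $[\mathcal Z_{n-1}^{\mathsf{Lie}}(\mathfrak g_i),\mathfrak g_i]_{\mathsf{Lie}}\subseteq\gamma_{n+1}^{\mathsf{Lie}}(\mathfrak g_i)$ for $i=1,2$. Then for $\{i,j\}=\{1,2\}$, $$\mathcal K/Z_{\mathfrak g_j}\ \sim_n\ \mathcal K/Z_{\mathfrak g_i}\oplus\mathcal K/\gamma_{n+1}^{\mathsf{Lie}}(\mathcal K).$$
   Context: All Leibniz algebras are over a field $\mathbb{K}$ with $\frac12\in\mathbb{K}$. A Leibniz algebra is a vector space $\mathfrak g$ with a bilinear bracket $[-,-]$ satisfying $[x,[y,z]]=[[x,y],z]-[[x,z],y]$. For $x,y\in\mathfrak g$ put $[x,y]_{lie}=[x,y]+[y,x]$. For two-sided ideals $\mathfrak m,\mathfrak n$ of $\mathfrak g$, $[\mathfrak m,\mathfrak n]_{\mathsf{Lie}}$ denotes the two-sided ideal of $\mathfrak g$ generated by $\{[m,x]_{lie}: m\in\mathfrak m, x\in\mathfrak n\}$. Lower Lie-central series: $\gamma_1^{\mathsf{Lie}}(\mathfrak g)=\mathfrak g$, $\gamma_i^{\mathsf{Lie}}(\mathfrak g)=[\gamma_{i-1}^{\mathsf{Lie}}(\mathfrak g),\mathfrak g]_{\mathsf{Lie}}$ for $i\ge2$. Upper Lie-central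 series: $\mathcal Z_0^{\mathsf{Lie}}(\mathfrak g)=0$, $\mathcal Z_i^{\mathsf{Lie}}(\mathfrak g)=\{x\in\mathfrak g:[x,y]_{lie}\in\mathcal Z_{i-1}^{\mathsf{Lie}}(\mathfrak g)\ \text{for all } y\in\mathfrak g\}$ for $i\ge1$. For $n\ge0$, Leibniz algebras $\mathfrak g_1,\mathfrak g_2$ are $n$-Lie-isoclinic, written $\mathfrak g_1\sim_n\mathfrak g_2$, if there exist Leibniz algebra isomorphisms $\eta:\mathfrak g_1/\mathcal Z_n^{\mathsf{Lie}}(\mathfrak g_1)\to\mathfrak g_2/\mathcal Z_n^{\mathsf{Lie}}(\mathfrak g_2)$ and $\xi:\gamma_{n+1}^{\mathsf{Lie}}(\mathfrak g_1)\to\gamma_{n+1}^{\mathsf{Lie}}(\mathfrak g_2)$ such that $\xi([\cdots[[x_1,x_2]_{lie},x_3]_{lie},\ldots,x_{n+1}]_{lie})=[\cdots[[y_1,y_2]_{lie},y_3]_{lie},\ldots,y_{n+1}]_{lie}$ whenever $x_i\in\mathfrak g_1$, $y_i\in\mathfrak g_2$ satisfy $\eta(x_i+\mathcal Z_n^{\mathsf{Lie}}(\mathfrak g_1))=y_i+\mathcal Z_n^{\mathsf{Lie}}(\mathfrak g_2)$ for $i=1,\ldots,n+1$; $(\eta,\xi)$ is then called an $n$-Lie-isoclinism from $\mathfrak g_1$ to $\mathfrak g_2$. Given such $(\eta,\xi)$: $\mathcal K=\{(g,h)\in\mathfrak g_1\oplus\mathfrak g_2:\eta(g+\mathcal Z_n^{\mathsf{Lie}}(\mathfrak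 g_1))=h+\mathcal Z_n^{\mathsf{Lie}}(\mathfrak g_2)\}$ (a subalgebra of $\mathfrak g_1\oplus\mathfrak g_2$), $Z_{\mathfrak g_1}=\{(g,0):g\in\mathcal Z_n^{\mathsf{Lie}}(\mathfrak g_1)\}$ and $Z_{\mathfrak g_2}=\{(0,h):h\in\mathcal Z_n^{\mathsf{Lie}}(\mathfrak g_2)\}$ (two-sided ideals of $\mathcal K$). *)

(* Defs.v *)
From HB Require Import structures.
From mathcomp Require Import all_boot all_order all_algebra.
Unset Implicit Arguments. Unset Strict Implicit. Unset Printing Implicit Defensive.
Import GRing.Theory.
Local Open Scope ring_scope.

(* Quotient algebras S/I (S a subalgebra of an
   ambient algebra, I a two-sided ideal of S) are represented by the pair of
   predicates (S, I) on the ambient space, all notions being computed on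
   representatives. *)

Section Leibniz.
Variable K : fieldType.

Definition leibniz (V : lmodType K) (br : V -> V -> V) : Prop :=
  [/\ (forall (a : K) x y z, br (a *: x + y) z = a *: br x z + br y z),
      (forall (a : K) x y z, br z (a *: x + y) = a *: br z x + br z y) &
      (forall x y z, br x (br y z) = br (br x y) z - br (br x z) y)].

Definition lie (V : lmodType K) (br : V -> V -> V) (x y : V) : V :=
  br x y + br y x.
Arguments lie {V}.

Record QAlg := {
  qV : lmodType K;
  qbr : qV -> qV -> qV;
  qS : qV -> Prop;
  qI : qV -> Prop
}.

Definition subspaceP (V : lmodType K) (J : V -> Prop) : Prop :=
  J 0 /\ forall (a : K) x y, J x -> J y -> J (a *: x + y).
Arguments subspaceP {V}.

(* Preimage in S of the two-sided ideal of S/I generated by the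
   [m, x]_lie, m in M, x in N  (i.e. [M, N]_Lie of the algebra S/I). *)
Definition lieIdeal (A : QAlg) (M N : qV A -> Prop) : qV A -> Prop :=
  fun v => forall J : qV A -> Prop,
    subspaceP J ->
    (forall x, qI A x -> J x) ->
    (forall m x, M m -> N x -> J (lie (qbr A) m x)) ->
    (forall s j, qS A s -> J j -> J (qbr A s j) /\ J (qbr A j s)) ->
    J v.


Fixpoint lowerLie_aux (A : QAlg) (k : nat) : qV A -> Prop :=
  match k with
  | 0 => qS A
  | k'.+1 => lieIdeal A (lowerLie_aux A k') (qS A)
  end.

(* gamma_k^Lie(S/I) (preimage in S), k >= 1 ; gamma_1 = S. *)
Definition lowerLie (A : QAlg) (k : nat) : qV A -> Prop := lowerLie_aux A k.-1.

(* Z_k^Lie(S/I) (preimage in S); Z_0 = I. *)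
Fixpoint upperLie (A : QAlg) (k : nat) : qV A -> Prop :=
  match k with
  | 0 => qI A
  | k'.+1 => fun x => qS A x /\ forall y, qS A y -> upperLie A k' (lie (qbr A) x y)
  end.

Fixpoint iterLie (V : lmodType K) (br : V -> V -> V) (x : nat -> V) (k : nat) : V :=
  match k with
  | 0 => x 0%N
  | k'.+1 => lie br (iterLie V br x k') (x k)
  end.
Arguments iterLie {V}.

(* f : V -> W represents (via representatives) a Leibniz algebra isomorphism
   SA/IA -> SB/IB. *)
Definition qiso (V W : lmodType K) (brV : V -> V -> V) (brW : W -> W -> W)
  (SA IA : V -> Prop) (SB IB : W -> Prop) (f : V -> W) : Prop :=
  (forall x, SA x -> SB (f x)) /\
  (forall x y, SA x -> SA y -> IA (x - y) -> IB (f x - f y)) /\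
  (forall (a : K) x y, SA x -> SA y -> IB (f (a *: x + y) - (a *: f x + f y))) /\
  (forall x y, SA x -> SA y -> IB (f (brV x y) - brW (f x) (f y))) /\
  (forall x y, SA x -> SA y -> IB (f x - f y) -> IA (x - y)) /\
  (forall y, SB y -> exists2 x, SA x & IB (f x - y)).
Arguments qiso {V W}.

Definition is_isoclinism (n : nat) (A B : QAlg) (eta xi : qV A -> qV B) : Prop :=
  [/\ qiso (qbr A) (qbr B) (qS A) (upperLie A n) (qS B) (upperLie B n) eta,
      qiso (qbr A) (qbr B) (lowerLie A n.+1) (qI A) (lowerLie B n.+1) (qI B) xi &
      (forall (x : nat -> qV A) (y : nat -> qV B),
         (forall i, (i <= n)%N -> qS A (x i)) ->
         (forall i, (i <= n)%N -> qS B (y i)) ->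
         (forall i, (i <= n)%N -> upperLie B n (eta (x i) - y i)) ->
         qI B (xi (iterLie (qbr A) x n) - iterLie (qbr B) y n))].

Definition isoclinic (n : nat) (A B : QAlg) : Prop :=
  exists eta xi, is_isoclinism n A B eta xi.

Definition wholeQ (V : lmodType K) (br : V -> V -> V) : QAlg :=
  {| qV := V; qbr := br; qS := fun _ => True; qI := fun x => x = 0 |}.
Arguments wholeQ {V}.

Definition prod_br (V W : lmodType K) (brV : V -> V -> V) (brW : W -> W -> W)
  (p q : (V * W)%type) : (V * W)%type := (brV p.1 q.1, brW p.2 q.2).
Arguments prod_br {V W}.

Section Kdefs.
Variables (V1 V2 : lmodType K) (br1 : V1 -> V1 -> V1) (br2 : V2 -> V2 -> V2).
Variables (n : nat) (eta : V1 -> V2).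

(* K = {(g,h) : eta(g + Z_n(g1)) = h + Z_n(g2)} *)
Definition Kpred : (V1 * V2)%type -> Prop :=
  fun p => upperLie (wholeQ br2) n (eta p.1 - p.2).

Definition Zg1 : (V1 * V2)%type -> Prop :=
  fun p => upperLie (wholeQ br1) n p.1 /\ p.2 = 0.

Definition Zg2 : (V1 * V2)%type -> Prop :=
  fun p => p.1 = 0 /\ upperLie (wholeQ br2) n p.2.

Definition KmodQ (I : (V1 * V2)%type -> Prop) : QAlg :=
  {| qV := (V1 * V2)%type; qbr := prod_br br1 br2; qS := Kpred; qI := I |}.

Definition gammaK : (V1 * V2)%type -> Prop :=
  lowerLie (KmodQ (fun p => p = 0)) n.+1.

Definition KsumQ (I : (V1 * V2)%type -> Prop) : QAlg :=
  {| qV := ((V1 * V2) * (V1 * V2))%type;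
     qbr := prod_br (prod_br br1 br2) (prod_br br1 br2);
     qS := fun pq => Kpred pq.1 /\ Kpred pq.2;
     qI := fun pq => I pq.1 /\ gammaK pq.2 |}.
End Kdefs.

End Leibniz.
Arguments leibniz {K V}.
Arguments lie {K V}.
Arguments subspaceP {K V}.
Arguments lieIdeal {K}.
Arguments lowerLie_aux {K}.
Arguments lowerLie {K}.
Arguments upperLie {K}.
Arguments iterLie {K V}.
Arguments qiso {K V W}.
Arguments is_isoclinism {K}.
Arguments isoclinic {K}.
Arguments wholeQ {K V}.
Arguments prod_br {K V W}.
Arguments Kpred {K V1 V2}.
Arguments Zg1 {K V1} V2.
Arguments Zg2 {K} V1 {V2}.
Arguments KmodQ {K V1 V2}.
Arguments gammaK {K V1 V2}.
Arguments KsumQ {K V1 V2}.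
Arguments qV {K}.
Arguments qbr {K}.
Arguments qS {K}.
Arguments qI {K}.

(* Main.v *)
Require Import Defs.
From HB Require Import structures.
From mathcomp Require Import all_boot all_order all_algebra.
Import GRing.Theory.
Local Open Scope ring_scope.
Set Implicit Arguments. Unset Strict Implicit. Unset Printing Implicit Defensive.

Section Gen.
Variable K : fieldType.

Lemma sub0 (V : lmodType K) (J : V -> Prop) : subspaceP J -> J 0.
Proof. by case. Qed.
Lemma subD (V : lmodType K) (J : V -> Prop) x y : subspaceP J -> J x -> J y -> J (x + y).
Proof. case=> _ H Hx Hy; have := H 1 x y Hx Hy; by rewrite scale1r. Qed.
Lemma subZ (V : lmodType K) (J : V -> Prop) a x : subspaceP J -> J x -> J (a *: x).
Proof. case=> H0 H Hx; have := H a x 0 Hx H0; by rewrite addr0. Qed.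
Lemma subN (V : lmodType K) (J : V -> Prop) x : subspaceP J -> J x -> J (- x).
Proof. move=> HJ Hx; have := subZ (-1) HJ Hx; by rewrite scaleN1r. Qed.
Lemma subB (V : lmodType K) (J : V -> Prop) x y : subspaceP J -> J x -> J y -> J (x - y).
Proof. move=> HJ Hx Hy; apply: subD => //; exact: subN. Qed.
Lemma subL (V : lmodType K) (J : V -> Prop) a x y : subspaceP J -> J x -> J y -> J (a *: x + y).
Proof. by case=> _ H; apply: H. Qed.

Definition bilin (V : lmodType K) (br : V -> V -> V) :=
  (forall (a : K) x y z, br (a *: x + y) z = a *: br x z + br y z) /\
  (forall (a : K) x y z, br z (a *: x + y) = a *: br z x + br z y).

Lemma leib_bilin (V : lmodType K) (br : V -> V -> V) : leibniz br -> bilin br.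
Proof. by case. Qed.

Section Bil.
Variables (V : lmodType K) (br : V -> V -> V) (hb : bilin br).
Lemma brDl x y z : br (x + y) z = br x z + br y z.
Proof. have := hb.1 1 x y z; by rewrite !scale1r. Qed.
Lemma brDr x y z : br z (x + y) = br z x + br z y.
Proof. have := hb.2 1 x y z; by rewrite !scale1r. Qed.
Lemma br0l z : br 0 z = 0.
Proof. have := brDl 0 0 z; rewrite addr0 => h. apply: (addrI (br 0 z)). by rewrite addr0 -h. Qed.
Lemma br0r z : br z 0 = 0.
Proof. have := brDr 0 0 z; rewrite addr0 => h. apply: (addrI (br z 0)). by rewrite addr0 -h. Qed.
Lemma brZl a x z : br (a *: x) z = a *: br x z.
Proof. have := hb.1 a x 0 z; by rewrite addr0 br0l addr0. Qed.
Lemma brZr a x z : br z (a *: x) = a *: br z x.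
Proof. have := hb.2 a x 0 z; by rewrite addr0 br0r addr0. Qed.
Lemma brNl x z : br (- x) z = - br x z.
Proof. by rewrite -scaleN1r brZl scaleN1r. Qed.
Lemma brNr x z : br z (- x) = - br z x.
Proof. by rewrite -scaleN1r brZr scaleN1r. Qed.
Lemma brBl x y z : br (x - y) z = br x z - br y z.
Proof. by rewrite brDl brNl. Qed.
Lemma brBr x y z : br z (x - y) = br z x - br z y.
Proof. by rewrite brDr brNr. Qed.
Lemma lieDl x y z : lie br (x + y) z = lie br x z + lie br y z.
Proof. rewrite /lie brDl brDr. by rewrite addrACA. Qed.
Lemma lieZl a x z : lie br (a *: x) z = a *: lie br x z.
Proof. by rewrite /lie brZl brZr scalerDr. Qed.
Lemma lieLl a x y z : lie br (a *: x + y) z = a *: lie br x z + lie br y z.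
Proof. by rewrite lieDl lieZl. Qed.
Lemma lie0l z : lie br 0 z = 0.
Proof. by rewrite /lie br0l br0r addr0. Qed.
End Bil.

Lemma prod_bilin (V W : lmodType K) (b1 : V -> V -> V) (b2 : W -> W -> W) :
  bilin b1 -> bilin b2 -> bilin (prod_br b1 b2).
Proof.
move=> h1 h2; split=> a x y z; rewrite /prod_br /=.
- by rewrite h1.1 h2.1.
- by rewrite h1.2 h2.2.
Qed.

Section LI.
Variables (A : QAlg K) (M N : qV A -> Prop).
Lemma LI_sub : subspaceP (lieIdeal A M N).
Proof.
split; first by move=> J HJ _ _ _; exact: sub0 HJ.
move=> a x y Hx Hy J HJ H1 H2 H3. apply: subL => //; [exact: Hx | exact: Hy].
Qed.
Lemma LI_I x : qI A x -> lieIdeal A M N x.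
Proof. by move=> Hx J _ H1 _ _; apply: H1. Qed.
Lemma LI_gen m x : M m -> N x -> lieIdeal A M N (lie (qbr A) m x).
Proof. by move=> Hm Hx J _ _ H2 _; apply: H2. Qed.
Lemma LI_ideal s j : qS A s -> lieIdeal A M N j ->
  lieIdeal A M N (qbr A s j) /\ lieIdeal A M N (qbr A j s).
Proof.
move=> Hs Hj; split=> J HJ H1 H2 H3; have := H3 s j Hs (Hj J HJ H1 H2 H3); by case.
Qed.
End LI.

Lemma LAs_sub (A : QAlg K) k : subspaceP (lowerLie_aux A k.+1).
Proof. exact: LI_sub. Qed.
Lemma LAs0 (A : QAlg K) k : lowerLie_aux A k.+1 0.
Proof. exact: (sub0 (LAs_sub A k)). Qed.

Section LA.
Variable A : QAlg K.
Hypotheses (hS : subspaceP (qS A)) (hIS : forall x, qI A x -> qS A x)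
  (hbr : forall x y, qS A x -> qS A y -> qS A (qbr A x y)).

Lemma LA_S k x : lowerLie_aux A k x -> qS A x.
Proof.
elim: k x => [//|k IH] x /= Hx. apply: Hx => //.
- by move=> m y Hm Hy; rewrite /lie; apply: subD => //; apply: hbr => //; apply: IH.
- by move=> s j Hs Hj; split; apply: hbr.
Qed.

Lemma LA_sub k : subspaceP (lowerLie_aux A k).
Proof. case: k => [//|k]; exact: LI_sub. Qed.

Lemma LA_0 k : lowerLie_aux A k 0.
Proof. exact: sub0 (LA_sub k). Qed.

Lemma LA_mono k x : lowerLie_aux A k.+1 x -> lowerLie_aux A k x.
Proof.
elim: k x => [|k IH] x; first exact: LA_S.
move=> /= Hx; apply: Hx.
- exact: LI_sub.
- exact: LI_I.
- by move=> m y Hm Hy; apply: LI_gen => //; apply: IH.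
- by move=> s j Hs Hj; apply: LI_ideal.
Qed.

Lemma LA_mono_add d k x : lowerLie_aux A (k + d) x -> lowerLie_aux A k x.
Proof.
elim: d x => [|d IH] x; first by rewrite addn0.
by rewrite addnS => /LA_mono /IH.
Qed.
End LA.

Lemma LA_iter (A : QAlg K) k (x : nat -> qV A) :
  (forall i, (i <= k)%N -> qS A (x i)) -> lowerLie_aux A k (iterLie (qbr A) x k).
Proof.
elim: k => [|k IH] Hx /=; first exact: Hx.
apply: LI_gen; last exact: Hx.
by apply: IH => i Hi; apply: Hx; apply: leqW.
Qed.


Section Hom.
Variables (A : QAlg K) (W : lmodType K) (brW : W -> W -> W) (f : qV A -> W).
Hypotheses (hS : subspaceP (qS A)) (hIS : forall x, qI A x -> qS A x)
  (hbr : forall x y, qS A x -> qS A y -> qS A (qbr A x y))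
  (hlin : forall a x y, qS A x -> qS A y -> f (a *: x + y) = a *: f x + f y)
  (hbrf : forall x y, qS A x -> qS A y -> f (qbr A x y) = brW (f x) (f y))
  (hsurj : forall w, exists x, qS A x /\ f x = w)
  (hI : forall x, qS A x -> (qI A x <-> f x = 0)).

Lemma hf0 : f 0 = 0.
Proof.
have h := hlin 1 (sub0 hS) (sub0 hS). rewrite !scale1r addr0 in h.
apply: (addrI (f 0)). by rewrite addr0 -h.
Qed.
Lemma hfD x y : qS A x -> qS A y -> f (x + y) = f x + f y.
Proof. move=> Hx Hy; have := hlin 1 Hx Hy; by rewrite !scale1r. Qed.
Lemma hfB x y : qS A x -> qS A y -> f (x - y) = f x - f y.
Proof.
move=> Hx Hy; have := hlin (-1) Hy Hx; rewrite !scaleN1r => h.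
by rewrite addrC h addrC.
Qed.
Lemma hlieS x y : qS A x -> qS A y -> qS A (lie (qbr A) x y).
Proof. by move=> Hx Hy; rewrite /lie; apply: subD => //; apply: hbr. Qed.
Lemma hflie x y : qS A x -> qS A y -> f (lie (qbr A) x y) = lie brW (f x) (f y).
Proof. by move=> Hx Hy; rewrite /lie hfD ?hbrf //; apply: hbr. Qed.

Lemma hom_upper k x : upperLie A k x <-> qS A x /\ upperLie (wholeQ brW) k (f x).
Proof.
elim: k x => [|k IH] x /=.
  split; first by move=> HI; have Hs := hIS HI; split => //; apply/(hI Hs).
  by case=> Hs H0; apply/(hI Hs).
split.
- case=> Hs H; split => //; split => // w _.
  case: (hsurj w) => y [Hy <-]. rewrite -hflie //. by apply: (proj2 (proj1 (IH _) (H y Hy))).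
- case=> Hs [_ H]; split => // y Hy; apply/IH; split; first exact: hlieS.
  by rewrite hflie //; apply: H.
Qed.

Lemma hom_D k x u : qS A x -> qS A u -> f x = f u ->
  lowerLie_aux A k.+1 u -> lowerLie_aux A k.+1 x.
Proof.
move=> Hx Hu E Hl. rewrite -(subrK u x). apply: (subD (J := lowerLie_aux A k.+1)); [exact: LI_sub | | exact: Hl].
apply: LI_I; apply/hI; first exact: subB.
by rewrite hfB // E subrr.
Qed.

Lemma hom_lower k x : lowerLie_aux A k x <-> qS A x /\ lowerLie_aux (wholeQ brW) k (f x).
Proof.
elim: k x => [|k IH] x; first by simpl; tauto.
split.
- move=> Hx; split; first exact: (LA_S hS hIS hbr Hx).
  suff [] : qS A x /\ lowerLie_aux (wholeQ brW) k.+1 (f x) by [].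
  apply: (Hx (fun x => qS A x /\ lowerLie_aux (wholeQ brW) k.+1 (f x))).
  + split; first by split; [exact: sub0 hS | rewrite hf0; exact: LAs0].
    move=> a y z [Hy1 Hy2] [Hz1 Hz2]; split; first exact: subL.
    by rewrite hlin //; apply: (subL (J := lowerLie_aux (wholeQ brW) k.+1)) => //; exact: LI_sub.
  + move=> y HI; have Hs := hIS HI; split => //; have -> : f y = 0 by apply/(hI Hs).
    exact: LAs0.
  + move=> m y Hm Hy; have [Hm1 Hm2] := proj1 (IH m) Hm.
    split; first exact: hlieS. by rewrite hflie //; apply: LI_gen.
  + move=> s j Hs [Hj1 Hj2]; split; (split; first exact: hbr);
    rewrite hbrf //; by have [] := @LI_ideal (wholeQ brW) _ _ (f s) (f j) I Hj2.
- case=> Hs Hg.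
  have := Hg (fun w => forall x, qS A x -> f x = w -> lowerLie_aux A k.+1 x).
  apply; [ | | | | exact: Hs | by []].
  + split.
      by move=> y Hy E; apply: LI_I; apply/hI.
    move=> a w1 w2 H1 H2 y Hy E.
    case: (hsurj w1) => y1 [Hy1 E1]; case: (hsurj w2) => y2 [Hy2 E2].
    apply: (hom_D (u := a *: y1 + y2)) => //; first exact: subL.
      by rewrite hlin // E1 E2.
    apply: (subL (J := lowerLie_aux A k.+1)); [exact: LI_sub | exact: H1 | exact: H2].
  + by move=> w /= -> y Hy E; apply: LI_I; apply/hI.
  + move=> m w Hm _ y Hy E.
    case: (hsurj m) => m' [Hm' Em]; case: (hsurj w) => w' [Hw' Ew].
    have Hl : lowerLie_aux A k m' by apply/IH; split => //; rewrite Em.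
    apply: (hom_D (u := lie (qbr A) m' w')) => //; first exact: hlieS.
      by rewrite hflie // Em Ew.
    exact: LI_gen.
  + move=> s j _ Hj; split=> y Hy E;
    case: (hsurj s) => s' [Hs' Es]; case: (hsurj j) => j' [Hj' Ej];
    have Hl := Hj j' Hj' Ej; have [L1 L2] := LI_ideal Hs' Hl.
    * apply: (hom_D (u := qbr A s' j')) => //; [exact: hbr | by rewrite hbrf // Es Ej].
    * apply: (hom_D (u := qbr A j' s')) => //; [exact: hbr | by rewrite hbrf // Es Ej].
Qed.
End Hom.


Lemma pairL1 (V W : lmodType K) (a : K) (y z : V) :
  a *: ((y, 0) : (V * W)%type) + (z, 0) = (a *: y + z, 0).
Proof. have -> : ((a *: y + z, 0) : (V * W)%type) = (a *: y + z, a *: (0:W) + 0) by rewrite scaler0 addr0. reflexivity. Qed.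
Lemma pairL2 (V W : lmodType K) (a : K) (y z : W) :
  a *: ((0, y) : (V * W)%type) + (0, z) = (0, a *: y + z).
Proof. have -> : ((0, a *: y + z) : (V * W)%type) = (a *: (0:V) + 0, a *: y + z) by rewrite scaler0 addr0. reflexivity. Qed.

Lemma LA0' (A : QAlg K) k : qS A 0 -> lowerLie_aux A k 0.
Proof. case: k => [//|k] _; exact: LAs0. Qed.

Lemma lie_pair (V W : lmodType K) (b1 : V -> V -> V) (b2 : W -> W -> W) a b c d :
  lie (prod_br b1 b2) (a, b) (c, d) = (lie b1 a c, lie b2 b d).
Proof. by []. Qed.

Lemma pairA (V W : lmodType K) (a : V) (b : W) :
  ((a, 0) : (V * W)%type) + (0, b) = (a, b).
Proof. have -> : ((a, b) : (V * W)%type) = (a + 0, 0 + b) by rewrite addr0 add0r. reflexivity. Qed.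

Definition prodQ (A1 A2 : QAlg K) : QAlg K :=
  {| qV := (qV A1 * qV A2)%type; qbr := prod_br (qbr A1) (qbr A2);
     qS := fun p => qS A1 p.1 /\ qS A2 p.2;
     qI := fun p => qI A1 p.1 /\ qI A2 p.2 |}.

Section Prod.
Variables (A1 A2 : QAlg K).
Hypotheses (h1S : qS A1 0) (h2S : qS A2 0) (h1I : qI A1 0) (h2I : qI A2 0)
  (h1b : qbr A1 0 0 = 0) (h2b : qbr A2 0 0 = 0).

Lemma brp1 s j : qbr (prodQ A1 A2) (s, 0) (j, 0) = (qbr A1 s j, 0).
Proof. by rewrite /= /prod_br /= h2b. Qed.
Lemma brp2 s j : qbr (prodQ A1 A2) (0, s) (0, j) = (0, qbr A2 s j).
Proof. by rewrite /= /prod_br /= h1b. Qed.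

Lemma prod_upper k p : upperLie (prodQ A1 A2) k p <-> upperLie A1 k p.1 /\ upperLie A2 k p.2.
Proof.
elim: k p => [|k IH] p; first by [].
split.
- case=> [[Hs1 Hs2] H]; split; split => // y Hy.
  + by have := proj1 (IH _) (H (y, 0) (conj Hy h2S)); case.
  + by have := proj1 (IH _) (H (0, y) (conj h1S Hy)); case.
- case=> [[Hs1 H1] [Hs2 H2]]; split => // y [Hy1 Hy2].
  apply/IH; split; [exact: H1 | exact: H2].
Qed.

Lemma prod_lower k p : lowerLie_aux (prodQ A1 A2) k p <->
  lowerLie_aux A1 k p.1 /\ lowerLie_aux A2 k p.2.
Proof.
elim: k p => [|k IH] p; first by [].
split.
- move=> Hp.
  suff [] : lowerLie_aux A1 k.+1 p.1 /\ lowerLie_aux A2 k.+1 p.2 by [].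
  apply: (Hp (fun p => lowerLie_aux A1 k.+1 p.1 /\ lowerLie_aux A2 k.+1 p.2)).
  + split; first by split; apply: LAs0.
    move=> a x y [Hx1 Hx2] [Hy1 Hy2]; split.
    * exact: (subL (J := lowerLie_aux A1 k.+1) a (LAs_sub _ _) Hx1 Hy1).
    * exact: (subL (J := lowerLie_aux A2 k.+1) a (LAs_sub _ _) Hx2 Hy2).
  + by move=> x [H1 H2]; split; apply: LI_I.
  + move=> m x Hm [Hx1 Hx2]; have [Hm1 Hm2] := proj1 (IH m) Hm.
    by split; apply: LI_gen.
  + move=> s j [Hs1 Hs2] [Hj1 Hj2].
    have [a1 b1] := @LI_ideal A1 _ _ _ _ Hs1 Hj1.
    have [a2 b2] := @LI_ideal A2 _ _ _ _ Hs2 Hj2.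
    by split; split.
- case=> H1 H2.
  have P1 : forall x, lowerLie_aux A1 k.+1 x -> lowerLie_aux (prodQ A1 A2) k.+1 (x, 0).
    move=> x Hx.
    apply: (Hx (fun x => lowerLie_aux (prodQ A1 A2) k.+1 (x, 0))).
    * split; first exact: LAs0.
      move=> a y z Hy Hz.
      have := subL (J := lowerLie_aux (prodQ A1 A2) k.+1) a (LAs_sub _ _) Hy Hz.
      by rewrite pairL1.

    * by move=> y Hy; apply: LI_I.
    * move=> m y Hm Hy.
      have Hm' : lowerLie_aux (prodQ A1 A2) k (m, 0) by apply/IH; split => //; exact: LA0'.
      have := @LI_gen (prodQ A1 A2) _ (qS (prodQ A1 A2)) _ (y, 0) Hm' (conj Hy h2S).
      by rewrite lie_pair {2}/lie h2b addr0.
    * move=> s j Hs Hj.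
      have [] := @LI_ideal (prodQ A1 A2) _ _ (s, 0) (j, 0) (conj Hs h2S) Hj.
      by rewrite !brp1.
  have P2 : forall x, lowerLie_aux A2 k.+1 x -> lowerLie_aux (prodQ A1 A2) k.+1 (0, x).
    move=> x Hx.
    apply: (Hx (fun x => lowerLie_aux (prodQ A1 A2) k.+1 (0, x))).
    * split; first exact: LAs0.
      move=> a y z Hy Hz.
      have := subL (J := lowerLie_aux (prodQ A1 A2) k.+1) a (LAs_sub _ _) Hy Hz.
      by rewrite pairL2.
    * by move=> y Hy; apply: LI_I.
    * move=> m y Hm Hy.
      have Hm' : lowerLie_aux (prodQ A1 A2) k (0, m) by apply/IH; split => //; exact: LA0'.
      have := @LI_gen (prodQ A1 A2) _ (qS (prodQ A1 A2)) _ (0, y) Hm' (conj h1S Hy).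
      by rewrite lie_pair {1}/lie h1b addr0.
    * move=> s j Hs Hj.
      have [] := @LI_ideal (prodQ A1 A2) _ _ (0, s) (0, j) (conj h1S Hs) Hj.
      by rewrite !brp2.
  have := subD (LAs_sub (prodQ A1 A2) k) (P1 _ H1) (P2 _ H2).
  by case: p {H1 H2} => a b; rewrite pairA.
Qed.
End Prod.

Lemma iterLie_prod (V W : lmodType K) (b1 : V -> V -> V) (b2 : W -> W -> W)
  (x : nat -> (V * W)%type) k :
  iterLie (prod_br b1 b2) x k =
  (iterLie b1 (fun i => (x i).1) k, iterLie b2 (fun i => (x i).2) k).
Proof. elim: k => [|k IH] /=; first by case: (x 0%N). by rewrite IH. Qed.

Section Z.
Variables (V : lmodType K) (br : V -> V -> V) (hL : leibniz br).
Let hb := leib_bilin hL.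
Notation Z k := (upperLie (wholeQ br) k).

Lemma Z0 k : Z k 0.
Proof. elim: k => [//|k IH] /=; split => // y _; by rewrite lie0l. Qed.

Lemma Zsub k : subspaceP (Z k).
Proof.
elim: k => [|k IH] /=.
  by split => // a x y -> ->; rewrite scaler0 addr0.
split; first exact: (Z0 k.+1).
move=> a x y [_ Hx] [_ Hy]; split => // z _.
rewrite lieLl //; apply: subL => //; [exact: Hx | exact: Hy].
Qed.

Lemma Zmono k x : Z k x -> Z k.+1 x.
Proof.
elim: k x => [|k IH] x /=.
  by move=> ->; split => // y _; rewrite lie0l.
by case=> _ H; split => // y _; apply: IH; apply: H.
Qed.

Lemma lie_br_id x y z :
  lie br (br x z) y = br (lie br x y) z - lie br x (br y z).
Proof.
have [_ _ L3] := hL.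
rewrite /lie (brDl hb).
have e1 := L3 y x z. have e2 := L3 x y z. have e3 := L3 x z y.
have e4 : br (br x z) y = br (br x y) z - br x (br y z).
  by rewrite e2 opprB addrC subrK.
rewrite e4 e1.
set B := br (br x y) z; set A := br x (br y z); set D := br (br y x) z; set E := br (br y z) x.
rewrite opprD !addrA; congr (_ - _).
by rewrite addrC addrA [D + B]addrC.
Qed.

Lemma Zideal k x z : Z k x -> Z k (br x z) /\ Z k (br z x).
Proof.
elim: k x z => [|k IH] x z /=.
  by move=> ->; rewrite (br0l hb) (br0r hb).
case=> _ H.
have H1 : Z k.+1 (br x z).
  split => // y _; rewrite lie_br_id.
  apply: subB; first exact: Zsub.
    by have [] := IH _ z (H y I).
  exact: H.
split => //.
have -> : br z x = lie br x z - br x z by rewrite /lie addrC addKr.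
apply: (subB (J := Z k.+1)); [exact: Zsub | | exact: H1].
by apply: Zmono; apply: H.
Qed.
End Z.


Section Proj.
Variables (V W : lmodType K).
Implicit Types (x y : (V * W)%type).
Lemma fstB x y : (x - y).1 = x.1 - y.1. Proof. by []. Qed.
Lemma sndB x y : (x - y).2 = x.2 - y.2. Proof. by []. Qed.
Lemma fstL a x y : (a *: x + y).1 = a *: x.1 + y.1. Proof. by []. Qed.
Lemma sndL a x y : (a *: x + y).2 = a *: x.2 + y.2. Proof. by []. Qed.
Lemma fstN x : (- x).1 = - x.1. Proof. by []. Qed.
Lemma sndN x : (- x).2 = - x.2. Proof. by []. Qed.
Lemma fst0 : (0 : (V * W)%type).1 = 0. Proof. by []. Qed.
Lemma snd0 : (0 : (V * W)%type).2 = 0. Proof. by []. Qed.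
Lemma pair0 : ((0, 0) : (V * W)%type) = 0. Proof. by []. Qed.
End Proj.

Lemma U_S (A : QAlg K) k x : (forall x, qI A x -> qS A x) -> upperLie A k x -> qS A x.
Proof. case: k => [|k] /=; [exact | by move=> _ []]. Qed.

Lemma zmod_id1 (V : zmodType) (u p q e f : V) (a : K) : True.
Proof. by []. Qed.

End Gen.

From Stdlib Require Import ClassicalEpsilon.

Section Main.
Variables (K : fieldType) (V1 V2 : lmodType K)
  (br1 : V1 -> V1 -> V1) (br2 : V2 -> V2 -> V2) (n : nat) (eta xi : V1 -> V2).
Hypotheses (hL1 : leibniz br1) (hL2 : leibniz br2)
  (hiso : is_isoclinism n (wholeQ br1) (wholeQ br2) eta xi).

Notation Z1 := (upperLie (wholeQ br1) n).
Notation Z2 := (upperLie (wholeQ br2) n).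
Notation G1 := (lowerLie_aux (wholeQ br1) n).
Notation G2 := (lowerLie_aux (wholeQ br2) n).
Notation Kp := (Kpred br2 n eta).

Let hb1 := leib_bilin hL1.
Let hb2 := leib_bilin hL2.
Let Z1s := Zsub hL1 n.
Let Z2s := Zsub hL2 n.

Lemma eta_wd x y : Z1 (x - y) -> Z2 (eta x - eta y).
Proof. by case: hiso => [[_ [h _]] _ _] H; apply: h. Qed.
Lemma eta_lin a x y : Z2 (eta (a *: x + y) - (a *: eta x + eta y)).
Proof. by case: hiso => [[_ [_ [h _]]] _ _]; apply: h. Qed.
Lemma eta_br x y : Z2 (eta (br1 x y) - br2 (eta x) (eta y)).
Proof. by case: hiso => [[_ [_ [_ [h _]]]] _ _]; apply: h. Qed.
Lemma eta_inj x y : Z2 (eta x - eta y) -> Z1 (x - y).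
Proof. by case: hiso => [[_ [_ [_ [_ [h _]]]]] _ _] H; apply: h. Qed.
Lemma eta_surj y : exists x, Z2 (eta x - y).
Proof. case: hiso => [[_ [_ [_ [_ [_ h]]]]] _ _]; by case: (h y I) => x _ H; exists x. Qed.

Lemma xi_in x : G1 x -> G2 (xi x).
Proof. by case: hiso => [_ [h _] _]; apply: h. Qed.
Lemma xi_lin a x y : G1 x -> G1 y -> xi (a *: x + y) = a *: xi x + xi y.
Proof. case: hiso => [_ [_ [_ [h _]]] _] Hx Hy; apply/eqP; rewrite -subr_eq0; apply/eqP; exact: h. Qed.
Lemma xi_br x y : G1 x -> G1 y -> xi (br1 x y) = br2 (xi x) (xi y).
Proof. case: hiso => [_ [_ [_ [_ [h _]]]] _] Hx Hy; apply/eqP; rewrite -subr_eq0; apply/eqP; exact: h. Qed.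
Lemma xi_inj x y : G1 x -> G1 y -> xi x = xi y -> x = y.
Proof.
case: hiso => [_ [_ [_ [_ [_ [h _]]]]] _] Hx Hy E; apply/eqP; rewrite -subr_eq0; apply/eqP.
by apply: h => //; rewrite E subrr.
Qed.
Lemma xi_surj y : G2 y -> exists x, G1 x /\ xi x = y.
Proof.
case: hiso => [_ [_ [_ [_ [_ [_ h]]]]] _] Hy. case: (h y Hy) => x Hx E.
exists x; split => //; apply/eqP; rewrite -subr_eq0; exact/eqP.
Qed.
Lemma compat (x : nat -> V1) (y : nat -> V2) :
  (forall i, (i <= n)%N -> Z2 (eta (x i) - y i)) ->
  xi (iterLie br1 x n) = iterLie br2 y n.
Proof.
case: hiso => [_ _ h] H; apply/eqP; rewrite -subr_eq0; apply/eqP.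
by apply: h.
Qed.

Lemma eta0 : Z2 (eta 0).
Proof.
have := eta_lin 1 0 0. rewrite !scale1r addr0 opprD addrA subrr add0r.
move/(subN Z2s). by rewrite opprK.
Qed.
Lemma Z1toZ2 x : Z1 x -> Z2 (eta x).
Proof.
move=> H; have := eta_wd (x := x) (y := 0); rewrite subr0 => /(_ H) h.
have := subD Z2s h eta0; by rewrite subrK.
Qed.
Lemma Z2toZ1 x : Z2 (eta x) -> Z1 x.
Proof.
move=> H; have := subB Z2s H eta0 => /eta_inj; by rewrite subr0.
Qed.
Lemma KL d : Kp d -> Z2 d.2 -> Z1 d.1.
Proof. move=> Hk Hd; apply: Z2toZ1; have := subD Z2s Hk Hd; by rewrite subrK. Qed.
Lemma KL' d : Kp d -> Z1 d.1 -> Z2 d.2.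
Proof. move=> Hk Hd; have := subB Z2s (Z1toZ2 Hd) Hk; by rewrite opprB addrC subrK. Qed.

Lemma Kp_sub : subspaceP Kp.
Proof.
split; first by rewrite /Kpred subr0; exact: eta0.
move=> a x y Hx Hy; rewrite /Kpred fstL sndL.
have E : eta (a *: x.1 + y.1) - (a *: x.2 + y.2) =
  (eta (a *: x.1 + y.1) - (a *: eta x.1 + eta y.1)) +
  (a *: (eta x.1 - x.2) + (eta y.1 - y.2)).
  by rewrite scalerBr [a *: eta x.1 - _ + _]addrACA -opprD subrKA.
rewrite E; apply: subD => //; first exact: eta_lin.
exact: subL.
Qed.

Lemma Kp_br p q : Kp p -> Kp q -> Kp (prod_br br1 br2 p q).
Proof.
move=> Hp Hq; rewrite /Kpred /prod_br /=.
have E : eta (br1 p.1 q.1) - br2 p.2 q.2 =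
  (eta (br1 p.1 q.1) - br2 (eta p.1) (eta q.1)) +
  (br2 (eta p.1 - p.2) (eta q.1) + br2 p.2 (eta q.1 - q.2)).
  by rewrite (brBl hb2) (brBr hb2) !subrKA.
rewrite E; apply: subD => //; first exact: eta_br.
apply: subD => //.
- by have [] := Zideal hL2 (eta q.1) Hp.
- by have [] := Zideal hL2 p.2 Hq.
Qed.

Lemma Kp0 : Kp 0.
Proof. exact: sub0 Kp_sub. Qed.


Definition homOK (A : QAlg K) (W : lmodType K) (brW : W -> W -> W) (f : qV A -> W) :=
  subspaceP (qS A) /\ (forall x, qI A x -> qS A x) /\
   (forall x y, qS A x -> qS A y -> qS A (qbr A x y)) /\
   (forall a x y, qS A x -> qS A y -> f (a *: x + y) = a *: f x + f y) /\
   (forall x y, qS A x -> qS A y -> f (qbr A x y) = brW (f x) (f y)) /\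
   (forall w, exists x, qS A x /\ f x = w) /\
   (forall x, qS A x -> (qI A x <-> f x = 0)).

Lemma hom_upper' A W brW f : @homOK A W brW f ->
  forall k x, upperLie A k x <-> qS A x /\ upperLie (wholeQ brW) k (f x).
Proof. by case=> h1 [h2 [h3 [h4 [h5 [h6 h7]]]]] k x; apply: hom_upper. Qed.
Lemma hom_lower' A W brW f : @homOK A W brW f ->
  forall k x, lowerLie_aux A k x <-> qS A x /\ lowerLie_aux (wholeQ brW) k (f x).
Proof. by case=> h1 [h2 [h3 [h4 [h5 [h6 h7]]]]] k x; apply: hom_lower. Qed.

Notation A12 := (KmodQ br1 br2 n eta (Zg2 V1 br2 n)).
Notation A21 := (KmodQ br1 br2 n eta (Zg1 V2 br1 n)).
Notation A0 := (KmodQ br1 br2 n eta (fun p => p = 0)).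
Notation AG := (KmodQ br1 br2 n eta (gammaK br1 br2 n eta)).
Notation gK := (gammaK br1 br2 n eta).

Lemma hom12 : @homOK A12 _ br1 fst.
Proof.
refine (conj _ (conj _ (conj _ (conj _ (conj _ (conj _ _)))))) => //=.
- exact: Kp_sub.
- case=> x y [/= -> Hy]; rewrite /Kpred /=.
  have := subB Z2s eta0 Hy; done.
- exact: Kp_br.
- move=> w; exists (w, eta w); split => //; rewrite /Kpred /= subrr; exact: Z0.
- move=> x Hx; split; first by case.
  move=> H0; split => //; apply: KL' => //; rewrite H0; exact: Z0.
Qed.

Lemma hom21 : @homOK A21 _ br2 snd.
Proof.
refine (conj _ (conj _ (conj _ (conj _ (conj _ (conj _ _)))))) => //=.
- exact: Kp_sub.
- case=> x y [/= Hx ->]; rewrite /Kpred /= subr0; exact: Z1toZ2.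
- exact: Kp_br.
- move=> w; case: (eta_surj w) => x Hx; by exists (x, w).
- move=> x Hx; split; first by case.
  move=> H0; split => //; apply: KL => //; rewrite H0; exact: Z0.
Qed.

Lemma U12 k x : upperLie A12 k x <-> Kp x /\ upperLie (wholeQ br1) k x.1.
Proof. exact: (hom_upper' hom12). Qed.
Lemma L12 k x : lowerLie_aux A12 k x <-> Kp x /\ lowerLie_aux (wholeQ br1) k x.1.
Proof. exact: (hom_lower' hom12). Qed.
Lemma U21 k x : upperLie A21 k x <-> Kp x /\ upperLie (wholeQ br2) k x.2.
Proof. exact: (hom_upper' hom21). Qed.
Lemma L21 k x : lowerLie_aux A21 k x <-> Kp x /\ lowerLie_aux (wholeQ br2) k x.2.
Proof. exact: (hom_lower' hom21). Qed.

Lemma brK00 : prod_br br1 br2 0 0 = 0.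
Proof. by rewrite /prod_br /= (br0l hb1) (br0l hb2). Qed.

Lemma A0I y : qI A0 y -> qS A0 y.
Proof. by move=> /= ->; exact: Kp0. Qed.

Lemma A0S x : lowerLie_aux A0 n x -> Kp x.
Proof. apply: LA_S; [exact: Kp_sub | move=> y ->; exact: Kp0 | exact: Kp_br]. Qed.

Lemma UG x : Kp x -> upperLie AG n x.
Proof.
suff H : forall j m, (j + m)%N = n -> forall x, lowerLie_aux A0 m x -> upperLie AG j x.
  by move=> Hx; apply: (H n 0%N (addn0 n)).
elim=> [|j IH] m E y Hy /=; first by rewrite add0n in E; subst m.
split.
- exact: (@LA_S _ A0 Kp_sub A0I Kp_br _ _ Hy).
- move=> z Hz; apply: (IH m.+1); first by rewrite addnS.
  exact: LI_gen.
Qed.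

Lemma LG x : lowerLie_aux AG n x -> gK x.
Proof.
suff H : forall k y, (k <= n)%N -> lowerLie_aux AG k y -> lowerLie_aux A0 k y by apply: H.
elim=> [//|k IH] y Hk /= Hy; apply: Hy.
- exact: LI_sub.
- move=> z Hz.
  apply: (@LA_mono_add _ A0 Kp_sub A0I Kp_br (n - k.+1) k.+1).
  by rewrite subnKC.
- move=> m z Hm Hz; apply: LI_gen => //. apply: IH => //. exact: ltnW.
- by move=> s j Hs Hj; apply: LI_ideal.
Qed.


Lemma KsumQ1 : KsumQ br1 br2 n eta (Zg1 V2 br1 n) = prodQ A21 AG.
Proof. by []. Qed.
Lemma KsumQ2 : KsumQ br1 br2 n eta (Zg2 V1 br2 n) = prodQ A12 AG.
Proof. by []. Qed.

Lemma AGI y : qI AG y -> qS AG y.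
Proof. exact: A0S. Qed.

Lemma UAGK q : upperLie AG n q <-> Kp q.
Proof. split; [exact: U_S AGI | exact: UG]. Qed.

Lemma gK_sub : subspaceP gK.
Proof. exact: (@LA_sub _ A0 Kp_sub n). Qed.
Lemma gK0 : gK 0.
Proof. exact: (@LA0' _ A0 n Kp0). Qed.
Lemma LAG0 : lowerLie_aux AG n 0.
Proof. exact: (@LA0' _ AG n Kp0). Qed.

Lemma A0_iter (x : nat -> (V1 * V2)%type) k : (forall i, (i <= k)%N -> Kp (x i)) ->
  lowerLie_aux A0 k (iterLie (prod_br br1 br2) x k).
Proof. exact: (@LA_iter _ A0 k x). Qed.
Lemma Kp_iter (x : nat -> (V1 * V2)%type) k : (forall i, (i <= k)%N -> Kp (x i)) ->
  Kp (iterLie (prod_br br1 br2) x k).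
Proof. move=> H; exact: (@LA_S _ A0 Kp_sub A0I Kp_br _ _ (A0_iter H)). Qed.

Definition lift (h : V2) : (V1 * V2)%type :=
  (epsilon (inhabits 0) (fun g => Z2 (eta g - h)), h).
Lemma lift_K h : Kp (lift h).
Proof. rewrite /Kpred /lift /=; apply: (epsilon_spec (inhabits 0) (fun g => Z2 (eta g - h))); exact: eta_surj. Qed.

Definition eta1 (p : (V1 * V2)%type) : ((V1 * V2) * (V1 * V2))%type := (p, 0).
Definition xi1 (p : (V1 * V2)%type) : ((V1 * V2) * (V1 * V2))%type := (lift (xi p.1), 0).

Lemma UA1 p : upperLie A12 n p <-> Kp p /\ Z1 p.1.
Proof. exact: U12. Qed.
Lemma UB1 q : upperLie (prodQ A21 AG) n q <-> (Kp q.1 /\ Z2 q.1.2) /\ Kp q.2.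
Proof. rewrite (@prod_upper _ A21 AG Kp0 Kp0) U21 UAGK. by []. Qed.
Lemma LA1 p : lowerLie A12 n.+1 p <-> Kp p /\ G1 p.1.
Proof. exact: L12. Qed.
Lemma LB1 q : lowerLie (prodQ A21 AG) n.+1 q <-> (Kp q.1 /\ G2 q.1.2) /\ lowerLie_aux AG n q.2.
Proof.
have h1I : qI A21 0 by split => //; exact: Z0.
rewrite /lowerLie /= (@prod_lower _ A21 AG Kp0 Kp0 h1I gK0 brK00 brK00) L21. by [].
Qed.

Lemma UB1_0 : upperLie (prodQ A21 AG) n 0.
Proof. apply/UB1; split; [split; [exact: Kp0 | exact: Z0] | exact: Kp0]. Qed.

Lemma part1 : is_isoclinism n A12 (prodQ A21 AG) eta1 xi1.
Proof.
split.
- refine (conj _ (conj _ (conj _ (conj _ (conj _ _))))).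
  + by move=> x Hx; split => //; exact: Kp0.
  + move=> x y Hx Hy /UA1 [Hd Hz]; apply/UB1; split; [split|].
    * exact: Hd.
    * exact: (KL' Hd Hz).
    * exact: (subB Kp_sub Kp0 Kp0).
  + move=> a x y Hx Hy; rewrite /eta1 pairL1 subrr; exact: UB1_0.
  + move=> x y Hx Hy; rewrite /eta1 (@brp1 _ A21 AG brK00) subrr; exact: UB1_0.
  + move=> x y Hx Hy /UB1 [[Hd Hz] _]; apply/UA1; split; [exact: Hd | exact: (KL Hd Hz)].
  + move=> q [Hq1 Hq2]; exists q.1 => //; apply/UB1; split; [split|].
    * exact: (subB Kp_sub Hq1 Hq1).
    * change (Z2 ((q.1 - q.1).2)); rewrite subrr; exact: Z0.
    * exact: (subB Kp_sub Kp0 Hq2).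
- refine (conj _ (conj _ (conj _ (conj _ (conj _ _))))).
  + move=> p /LA1 [Hp Hg]; apply/LB1; split; [split|].
    * exact: lift_K.
    * exact: (xi_in Hg).
    * exact: LAG0.
  + move=> p p' _ _ [E1 _].
    have E : p.1 = p'.1 by apply/eqP; rewrite -subr_eq0; apply/eqP.
    rewrite /xi1 E subrr; split; [split; [exact: Z0 | done] | exact: gK0].
  + move=> a p q /LA1 [Hp Hg] /LA1 [Hq Hgq].
    have E2 : (xi1 (a *: p + q) - (a *: xi1 p + xi1 q)).1.2 = 0.
      change (xi (a *: p.1 + q.1) - (a *: xi p.1 + xi q.1) = 0).
      by rewrite xi_lin // subrr.
    split; [split|].
    * apply: KL; last by rewrite E2; exact: Z0.
      change (Kp (lift (xi (a *: p + q).1) - (a *: lift (xi p.1) + lift (xi q.1)))).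
      exact: (subB Kp_sub (lift_K _) (subL a Kp_sub (lift_K _) (lift_K _))).
    * exact: E2.
    * change (gK (0 - (a *: 0 + 0))); rewrite scaler0 addr0 subrr; exact: gK0.
  + move=> p q /LA1 [Hp Hg] /LA1 [Hq Hgq].
    have E2 : (xi1 (prod_br br1 br2 p q) -
               prod_br (prod_br br1 br2) (prod_br br1 br2) (xi1 p) (xi1 q)).1.2 = 0.
      change (xi (br1 p.1 q.1) - br2 (xi p.1) (xi q.1) = 0).
      by rewrite xi_br // subrr.
    split; [split|].
    * apply: KL; last by rewrite E2; exact: Z0.
      change (Kp (lift (xi (prod_br br1 br2 p q).1) - prod_br br1 br2 (lift (xi p.1)) (lift (xi q.1)))).
      exact: (subB Kp_sub (lift_K _) (Kp_br (lift_K _) (lift_K _))).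
    * exact: E2.
    * change (gK (0 - prod_br br1 br2 0 0)); rewrite brK00 subrr; exact: gK0.
  + move=> p p' /LA1 [Hp Hg] /LA1 [Hp' Hg'] [[_ E2] _].
    have E : p.1 = p'.1.
      apply: xi_inj => //; apply/eqP; rewrite -subr_eq0; apply/eqP; exact: E2.
    split.
    * change (p.1 - p'.1 = 0); by rewrite E subrr.
    * apply: KL'; first exact: (subB Kp_sub Hp Hp').
      change (Z1 (p.1 - p'.1)); rewrite E subrr; exact: Z0.
  + move=> q /LB1 [[Hq1 Hg] Hq2].
    case: (xi_surj Hg) => g [Hg1 Eg].
    exists (g, eta g).
      apply/LA1; split => //; rewrite /Kpred /= subrr; exact: Z0.
    have E2 : (xi1 (g, eta g) - q).1.2 = 0.
      by change (xi g - q.1.2 = 0); rewrite Eg subrr.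
    split; [split|].
    * apply: KL; last by rewrite E2; exact: Z0.
      change (Kp (lift (xi g) - q.1)).
      exact: (subB Kp_sub (lift_K _) Hq1).
    * exact: E2.
    * exact: (subB gK_sub gK0 (LG Hq2)).
- move=> x y Hx Hy Hxy.
  have Hc : forall i, (i <= n)%N -> Z2 (eta (x i).1 - ((y i).1).2).
    move=> i Hi; have [[Hd Hz] _] := proj1 (UB1 _) (Hxy i Hi).
    have := subD Z2s (Hx i Hi) Hz. change (Z2 (eta (x i).1 - (x i).2 + ((x i).2 - ((y i).1).2)) -> Z2 (eta (x i).1 - ((y i).1).2)).
    by rewrite subrKA.
  have E := compat Hc.
  have Ey : iterLie (qbr (prodQ A21 AG)) y n =
    (iterLie (prod_br br1 br2) (fun i => (y i).1) n,
     iterLie (prod_br br1 br2) (fun i => (y i).2) n) := iterLie_prod _ _ y n.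
  have Ex : iterLie (qbr A12) x n =
    (iterLie br1 (fun i => (x i).1) n, iterLie br2 (fun i => (x i).2) n) := iterLie_prod _ _ x n.
  rewrite Ey Ex.
  have Ey1 := iterLie_prod br1 br2 (fun i => (y i).1) n.
  have E2 : (xi1 (iterLie br1 (fun i => (x i).1) n, iterLie br2 (fun i => (x i).2) n) -
     (iterLie (prod_br br1 br2) (fun i => (y i).1) n,
      iterLie (prod_br br1 br2) (fun i => (y i).2) n)).1.2 = 0.
    change (xi (iterLie br1 (fun i => (x i).1) n) -
            (iterLie (prod_br br1 br2) (fun i => (y i).1) n).2 = 0).
    by rewrite Ey1 /= E subrr.
  split; [split|].
  + apply: KL; last by rewrite E2; exact: Z0.
    apply: (subB Kp_sub (lift_K _)); apply: Kp_iter => i Hi; by case: (Hy i Hi).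
  + exact: E2.
  + apply: (subB gK_sub gK0); apply: A0_iter => i Hi; by case: (Hy i Hi).
Qed.


Lemma G1s : subspaceP G1.
Proof. exact: (@LA_sub _ (wholeQ br1) (conj I (fun _ _ _ _ _ => I)) n). Qed.
Lemma G2s : subspaceP G2.
Proof. exact: (@LA_sub _ (wholeQ br2) (conj I (fun _ _ _ _ _ => I)) n). Qed.
Lemma G1br x y : G1 x -> G1 y -> G1 (br1 x y).
Proof.
case: n x y => [//|k] x y Hx Hy.
by have [] := @LI_ideal _ (wholeQ br1) _ _ x y I Hy.
Qed.
Lemma G2br x y : G2 x -> G2 y -> G2 (br2 x y).
Proof.
case: n x y => [//|k] x y Hx Hy.
by have [] := @LI_ideal _ (wholeQ br2) _ _ x y I Hy.
Qed.

Definition xinv (h : V2) : V1 := epsilon (inhabits 0) (fun g => G1 g /\ xi g = h).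
Lemma xinv_spec h : G2 h -> G1 (xinv h) /\ xi (xinv h) = h.
Proof.
move=> Hh; apply: (epsilon_spec (inhabits 0) (fun g => G1 g /\ xi g = h)).
exact: xi_surj.
Qed.
Lemma xinv_eq h g : G2 h -> G1 g -> xi g = h -> xinv h = g.
Proof. move=> Hh Hg E; have [H1 H2] := xinv_spec Hh; apply: xi_inj => //; by rewrite H2. Qed.

Lemma Kpe g : Kp (g, eta g).
Proof. rewrite /Kpred /= subrr; exact: Z0. Qed.

Definition xi2 (p : (V1 * V2)%type) : ((V1 * V2) * (V1 * V2))%type :=
  ((xinv p.2, eta (xinv p.2)), 0).

Lemma UA2 p : upperLie A21 n p <-> Kp p /\ Z2 p.2.
Proof. exact: U21. Qed.
Lemma UB2 q : upperLie (prodQ A12 AG) n q <-> (Kp q.1 /\ Z1 q.1.1) /\ Kp q.2.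
Proof. rewrite (@prod_upper _ A12 AG Kp0 Kp0) U12 UAGK. by []. Qed.
Lemma LA2 p : lowerLie A21 n.+1 p <-> Kp p /\ G2 p.2.
Proof. exact: L21. Qed.
Lemma LB2 q : lowerLie (prodQ A12 AG) n.+1 q <-> (Kp q.1 /\ G1 q.1.1) /\ lowerLie_aux AG n q.2.
Proof.
have h1I : qI A12 0 by split => //; exact: Z0.
rewrite /lowerLie /= (@prod_lower _ A12 AG Kp0 Kp0 h1I gK0 brK00 brK00) L12. by [].
Qed.
Lemma UB2_0 : upperLie (prodQ A12 AG) n 0.
Proof. apply/UB2; split; [split; [exact: Kp0 | exact: Z0] | exact: Kp0]. Qed.

Lemma part2 : is_isoclinism n A21 (prodQ A12 AG) eta1 xi2.
Proof.
split.
- refine (conj _ (conj _ (conj _ (conj _ (conj _ _))))).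
  + by move=> x Hx; split => //; exact: Kp0.
  + move=> x y Hx Hy /UA2 [Hd Hz]; apply/UB2; split; [split|].
    * exact: Hd.
    * exact: (KL Hd Hz).
    * exact: (subB Kp_sub Kp0 Kp0).
  + move=> a x y Hx Hy; rewrite /eta1 pairL1 subrr; exact: UB2_0.
  + move=> x y Hx Hy; rewrite /eta1 (@brp1 _ A12 AG brK00) subrr; exact: UB2_0.
  + move=> x y Hx Hy /UB2 [[Hd Hz] _]; apply/UA2; split; [exact: Hd | exact: (KL' Hd Hz)].
  + move=> q [Hq1 Hq2]; exists q.1 => //; apply/UB2; split; [split|].
    * exact: (subB Kp_sub Hq1 Hq1).
    * change (Z1 ((q.1 - q.1).1)); rewrite subrr; exact: Z0.
    * exact: (subB Kp_sub Kp0 Hq2).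
- refine (conj _ (conj _ (conj _ (conj _ (conj _ _))))).
  + move=> p /LA2 [Hp Hg]; apply/LB2; split; [split|].
    * exact: Kpe.
    * exact: (proj1 (xinv_spec Hg)).
    * exact: LAG0.
  + move=> p p' _ _ [_ E1].
    have E : p.2 = p'.2 by apply/eqP; rewrite -subr_eq0; apply/eqP.
    rewrite /xi2 E subrr; split; [split; [done | exact: Z0] | exact: gK0].
  + move=> a p q /LA2 [Hp Hg] /LA2 [Hq Hgq].
    have [Sp1 Sp2] := xinv_spec Hg; have [Sq1 Sq2] := xinv_spec Hgq.
    have E1 : xinv (a *: p.2 + q.2) = a *: xinv p.2 + xinv q.2.
      apply: xinv_eq; [exact: (subL a G2s Hg Hgq) | exact: (subL a G1s Sp1 Sq1) | by rewrite xi_lin // Sp2 Sq2].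
    have E2 : (xi2 (a *: p + q) - (a *: xi2 p + xi2 q)).1.1 = 0.
      change (xinv (a *: p.2 + q.2) - (a *: xinv p.2 + xinv q.2) = 0).
      by rewrite E1 subrr.
    split; [split|].
    * exact: E2.
    * apply: KL'; last by rewrite E2; exact: Z0.
      change (Kp ((xinv (a *: p + q).2, eta (xinv (a *: p + q).2)) -
                  (a *: (xinv p.2, eta (xinv p.2)) + (xinv q.2, eta (xinv q.2))))).
      exact: (subB Kp_sub (Kpe _) (subL a Kp_sub (Kpe _) (Kpe _))).
    * change (gK (0 - (a *: 0 + 0))); rewrite scaler0 addr0 subrr; exact: gK0.
  + move=> p q /LA2 [Hp Hg] /LA2 [Hq Hgq].
    have [Sp1 Sp2] := xinv_spec Hg; have [Sq1 Sq2] := xinv_spec Hgq.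
    have E1 : xinv (br2 p.2 q.2) = br1 (xinv p.2) (xinv q.2).
      apply: xinv_eq; [exact: G2br | exact: G1br | by rewrite xi_br // Sp2 Sq2].
    have E2 : (xi2 (prod_br br1 br2 p q) -
               prod_br (prod_br br1 br2) (prod_br br1 br2) (xi2 p) (xi2 q)).1.1 = 0.
      change (xinv (br2 p.2 q.2) - br1 (xinv p.2) (xinv q.2) = 0).
      by rewrite E1 subrr.
    split; [split|].
    * exact: E2.
    * apply: KL'; last by rewrite E2; exact: Z0.
      change (Kp ((xinv (prod_br br1 br2 p q).2, eta (xinv (prod_br br1 br2 p q).2)) -
         prod_br br1 br2 (xinv p.2, eta (xinv p.2)) (xinv q.2, eta (xinv q.2)))).
      exact: (subB Kp_sub (Kpe _) (Kp_br (Kpe _) (Kpe _))).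
    * change (gK (0 - prod_br br1 br2 0 0)); rewrite brK00 subrr; exact: gK0.
  + move=> p p' /LA2 [Hp Hg] /LA2 [Hp' Hg'] [[E2 _] _].
    have [Sp1 Sp2] := xinv_spec Hg; have [Sq1 Sq2] := xinv_spec Hg'.
    have E : p.2 = p'.2.
      have E3 : xinv p.2 = xinv p'.2.
        apply/eqP; rewrite -subr_eq0; apply/eqP; exact: E2.
      by rewrite -Sp2 -Sq2 E3.
    split.
    * apply: KL; first exact: (subB Kp_sub Hp Hp').
      change (Z2 (p.2 - p'.2)); rewrite E subrr; exact: Z0.
    * change (p.2 - p'.2 = 0); by rewrite E subrr.
  + move=> q /LB2 [[Hq1 Hg] Hq2].
    have Hh := xi_in Hg.
    exists (lift (xi q.1.1)).
      apply/LA2; split; [exact: lift_K | exact: Hh].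
    have E1 : xinv (xi q.1.1) = q.1.1 by apply: xinv_eq.
    split; [split|].
    * change (xinv (xi q.1.1) - q.1.1 = 0); by rewrite E1 subrr.
    * change (Z2 (eta (xinv (xi q.1.1)) - q.1.2)); rewrite E1; exact: Hq1.
    * exact: (subB gK_sub gK0 (LG Hq2)).
- move=> x y Hx Hy Hxy.
  have Hc : forall i, (i <= n)%N -> Z2 (eta ((y i).1).1 - (x i).2).
    move=> i Hi; have [[Hd Hz] _] := proj1 (UB2 _) (Hxy i Hi).
    have Hw := eta_wd Hz.
    have := subB Z2s (Hx i Hi) Hw.
    change (Z2 (eta (x i).1 - (x i).2 - (eta (x i).1 - eta (y i).1.1)) ->
            Z2 (eta (y i).1.1 - (x i).2)).
    by rewrite opprB addrC subrKA.
  have E := compat Hc.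
  have Ey : iterLie (qbr (prodQ A12 AG)) y n =
    (iterLie (prod_br br1 br2) (fun i => (y i).1) n,
     iterLie (prod_br br1 br2) (fun i => (y i).2) n) := iterLie_prod _ _ y n.
  have Ex : iterLie (qbr A21) x n =
    (iterLie br1 (fun i => (x i).1) n, iterLie br2 (fun i => (x i).2) n) := iterLie_prod _ _ x n.
  rewrite Ey Ex.
  have Ey1 := iterLie_prod br1 br2 (fun i => (y i).1) n.
  set u := iterLie br1 (fun i => ((y i).1).1) n.
  have Gu : G1 u.
    exact: (@LA_iter _ (wholeQ br1) n (fun i => ((y i).1).1) (fun _ _ => I)).
  have E1 : xinv (iterLie br2 (fun i => (x i).2) n) = u.
    apply: xinv_eq => //; rewrite -E; exact: xi_in.
  have E2 : (xi2 (iterLie br1 (fun i => (x i).1) n, iterLie br2 (fun i => (x i).2) n) -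
     (iterLie (prod_br br1 br2) (fun i => (y i).1) n,
      iterLie (prod_br br1 br2) (fun i => (y i).2) n)).1.1 = 0.
    change (xinv (iterLie br2 (fun i => (x i).2) n) -
            (iterLie (prod_br br1 br2) (fun i => (y i).1) n).1 = 0).
    by rewrite Ey1 /= E1 subrr.
  split; [split|].
  + exact: E2.
  + apply: KL'; last by rewrite E2; exact: Z0.
    apply: (subB Kp_sub (Kpe _)); apply: Kp_iter => i Hi; by case: (Hy i Hi).
  + apply: (subB gK_sub gK0); apply: A0_iter => i Hi; by case: (Hy i Hi).
Qed.

End Main.

Theorem mainTheorem8 (K : fieldType) (V1 V2 : lmodType K)
  (br1 : V1 -> V1 -> V1) (br2 : V2 -> V2 -> V2) (n : nat) (eta xi : V1 -> V2) :
  (2%:R : K) != 0 ->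
  leibniz br1 -> leibniz br2 ->
  (1 <= n)%N ->
  is_isoclinism n (wholeQ br1) (wholeQ br2) eta xi ->
  (forall x, lieIdeal (wholeQ br1) (upperLie (wholeQ br1) n.-1) (qS (wholeQ br1)) x ->
             lowerLie (wholeQ br1) n.+1 x) ->
  (forall x, lieIdeal (wholeQ br2) (upperLie (wholeQ br2) n.-1) (qS (wholeQ br2)) x ->
             lowerLie (wholeQ br2) n.+1 x) ->
  isoclinic n (KmodQ br1 br2 n eta (Zg2 V1 br2 n))
              (KsumQ br1 br2 n eta (Zg1 V2 br1 n)) /\
  isoclinic n (KmodQ br1 br2 n eta (Zg1 V2 br1 n))
              (KsumQ br1 br2 n eta (Zg2 V1 br2 n)).
Proof.
move=> _ hL1 hL2 _ hiso _ _; split.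
- exists (eta1 (V1:=V1) (V2:=V2)); exists (xi1 br2 n eta xi).
  exact: (part1 hL1 hL2 hiso).
- exists (eta1 (V1:=V1) (V2:=V2)); exists (xi2 br1 n eta xi).
  exact: (part2 hL1 hL2 hiso).
Qed.
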